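(* Let $0<a,b<1$, $r>as$, $s>br$, let $(\xi_n)$, $(\chi_n)$ satisfy Assumption 1, and let $\alpha,\beta\in[0,1)$, $\ell\in[0,\min\{\alpha,1-\alpha\})$, $\bar\ell\in[0,\min\{\beta,1-\beta\})$. Suppose there exist $\lambda\in(0,1)$ and a norm on $\mathbb R^2$ (with induced matrix norm $\|\cdot\|$) such that for every $n\in\mathbb N$, almost surely, $\|J_{\alpha+\ell\xi_n,\beta+\bar\ell\chi_n}\|\le\lambda$. Then there is $\delta_0>0$ such that every solution $(x_n,y_n)$ of $$x_{n+1}=x_n[(1-\alpha-\ell\xi_{n+1})e^{r-x_n-ay_n}+\alpha+\ell\xi_{n+1}],\quad y_{n+1}=y_n[(1-\beta-\bar\ell\chi_{n+1})e^{s-bx_n-y_n}+\beta+\bar\ell\chi_{n+1}]$$ with $(x_0,y_0)\in B(K,\delta_0)$ satisfies $\lim_{n\to\infty}(x_n,y_n)=K$ almost surely.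
   Context: $p=\frac{r-as}{1-ab}$, $q=\frac{s-br}{1-ab}$, $K=(p,q)$; $J_{\alpha,\beta}=\begin{pmatrix}1-(1-\alpha)p & -a(1-\alpha)p\\ -b(1-\beta)q & 1-(1-\beta)q\end{pmatrix}$. Assumption 1: on a probability space, $(\xi_n)_{n\in\mathbb N}$ and $(\chi_n)_{n\in\mathbb N}$ are mutually independent sequences, each consisting of independent identically distributed random variables, with $|\xi_n|\le1$, $|\chi_n|\le1$ for all $n$. *)

(* Defs.v *)
From HB Require Import structures.
From mathcomp Require Import all_boot all_order all_algebra.
From mathcomp Require Import all_classical all_reals all_analysis.
Set Implicit Arguments. Unset Strict Implicit. Unset Printing Implicit Defensive.
Import Order.TTheory GRing.Theory Num.Theory.
Import numFieldNormedType.Exports.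
Local Open Scope classical_set_scope.
Local Open Scope ring_scope.

Definition mutually_independent d (T : measurableType d) (R : realType)
  (P : probability T R) (I : eqType) (X : I -> T -> R) : Prop :=
  forall (J : seq I) (B : I -> set R), uniq J ->
    (forall i, measurable (B i)) ->
    P (\bigcap_(i in [set` J]) (X i @^-1` B i)) =
    (\prod_(i <- J) P (X i @^-1` B i))%E.

Definition identically_distributed d (T : measurableType d) (R : realType)
  (P : probability T R) (X : nat -> T -> R) : Prop :=
  forall n (B : set R), measurable B -> P (X n @^-1` B) = P (X 0%N @^-1` B).

Definition assumption1 d (T : measurableType d) (R : realType)
  (P : probability T R) (xi chi : nat -> T -> R) : Prop :=
  [/\ forall n, measurable_fun setT (xi n),
      forall n, measurable_fun setT (chi n),
      mutually_independent P
        (fun k : nat + nat => match k with inl n => xi n | inr n => chi n end),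
      identically_distributed P xi /\ identically_distributed P chi &
      forall n t, `|xi n t| <= 1 /\ `|chi n t| <= 1].

Definition is_norm (R : realType) (N : 'cV[R]_2 -> R) : Prop :=
  [/\ forall v, 0 <= N v,
      forall v, N v = 0 -> v = 0,
      forall (c : R) v, N (c *: v) = `|c| * N v &
      forall u v, N (u + v) <= N u + N v].

Definition opnorm (R : realType) (N : 'cV[R]_2 -> R) (A : 'M[R]_2) : R :=
  sup [set N (A *m v) | v in [set v | N v = 1]].

Definition Kp (R : realType) (a b r s : R) : R := (r - a * s) / (1 - a * b).
Definition Kq (R : realType) (a b r s : R) : R := (s - b * r) / (1 - a * b).

Definition Jmat (R : realType) (a b r s al be : R) : 'M[R]_2 :=
  let p := Kp a b r s in let q := Kq a b r s in
  \matrix_(i < 2, j < 2)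
    if (i : nat) == 0%N then
      (if (j : nat) == 0%N then 1 - (1 - al) * p else - a * (1 - al) * p)
    else
      (if (j : nat) == 0%N then - b * (1 - be) * q else 1 - (1 - be) * q).

(* Main.v *)
Require Import Defs.
From HB Require Import structures.
From mathcomp Require Import all_boot all_order all_algebra.
From mathcomp Require Import all_classical all_reals all_analysis.
From mathcomp Require Import ring lra.
Import Order.TTheory GRing.Theory Num.Theory.
Import numFieldNormedType.Exports.
Local Open Scope classical_set_scope.
Local Open Scope ring_scope.
Set Implicit Arguments. Unset Strict Implicit. Unset Printing Implicit Defensive.
Lemma lip_cont (R : realType) (f : R -> R) (k : R) : 0 < k ->
  (forall x y, `|f x - f y| <= k * `|x - y|) -> continuous f.
Proof.
move=> k0 Hf x; apply/cvgrPdist_le => e e0.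
have ke : 0 < e / k by rewrite divr_gt0.
have h := (@cvgrPdist_le _ _ _ _ _ id x).1 (@cvg_id _ (nbhs x)) _ ke.
near=> y.
apply: le_trans (Hf _ _) _.
have hy : `|x - y| <= e / k by near: y; exact: h.
by rewrite mulrC -ler_pdivlMr.
Unshelve. all: by end_near.
Qed.
Definition v2 {R : realType} (u v : R) : 'cV[R]_2 :=
  \col_(i < 2) (if (i : nat) == 0%N then u else v).

Lemma v2_dec (R : realType) (w : 'cV[R]_2) : w = v2 (w 0 0) (w 1 0).
Proof.
apply/matrixP => i j; rewrite !mxE (ord1 j).
by case: i => [[|[|//]] ?] /=; congr (w _ _); apply: val_inj.
Qed.

Lemma v2_lin (R : realType) (u v : R) : v2 u v = u *: v2 1 0 + v *: v2 0 1.
Proof.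
apply/matrixP => i j; rewrite !mxE.
by case: ifP => _; rewrite ?mulr1 ?mulr0 ?addr0 ?add0r.
Qed.

Lemma v2_sub (R : realType) (u v u' v' : R) : v2 u v - v2 u' v' = v2 (u - u') (v - v').
Proof. by apply/matrixP => i j; rewrite !mxE; case: ifP. Qed.

Lemma v2_scale (R : realType) (c u v : R) : c *: v2 u v = v2 (c * u) (c * v).
Proof. by apply/matrixP => i j; rewrite !mxE; case: ifP. Qed.

Section Norm.
Variables (R : realType) (N : 'cV[R]_2 -> R).
Hypothesis hN : is_norm N.

Lemma N_ge0 w : 0 <= N w. Proof. by case: hN. Qed.
Lemma N_scale c w : N (c *: w) = `|c| * N w. Proof. by case: hN. Qed.
Lemma N_tri u w : N (u + w) <= N u + N w. Proof. by case: hN. Qed.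
Lemma N_eq0 w : N w = 0 -> w = 0. Proof. case: hN => _ h _ _; exact: h. Qed.
Lemma N_opp w : N (- w) = N w.
Proof. by rewrite -scaleN1r N_scale normrN normr1 mul1r. Qed.
Lemma N_0 : N 0 = 0.
Proof. by rewrite -(scale0r (0 : 'cV[R]_2)) N_scale normr0 mul0r. Qed.
Lemma N_dist u w : `|N u - N w| <= N (u - w).
Proof.
rewrite ler_norml; apply/andP; split.
  have := N_tri (w - u) u; rewrite subrK -opprB N_opp; lra.
have := N_tri (u - w) w; rewrite subrK; lra.
Qed.

Lemma N_up u v : N (v2 u v) <= `|u| * N (v2 1 0) + `|v| * N (v2 0 1).
Proof. by rewrite v2_lin -!N_scale; apply: N_tri. Qed.

Lemma N_v2_pos1 t : 0 < N (v2 1 t).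
Proof.
rewrite lt_def N_ge0 andbT; apply/eqP => /N_eq0 /matrixP /(_ 0 0).
by rewrite !mxE /= => /eqP; rewrite oner_eq0.
Qed.
Lemma N_v2_pos2 t : 0 < N (v2 t 1).
Proof.
rewrite lt_def N_ge0 andbT; apply/eqP => /N_eq0 /matrixP /(_ 1 0).
by rewrite !mxE /= => /eqP; rewrite oner_eq0.
Qed.

Lemma N_min1 : exists2 m, 0 < m & forall t, -1 <= t <= 1 -> m <= N (v2 1 t).
Proof.
have k0 : 0 < N (v2 0 1) + 1 by have := N_ge0 (v2 0 1); lra.
have cf : continuous (fun t => N (v2 1 t)).
  apply: (lip_cont k0) => x y.
  apply: le_trans (N_dist _ _) _.
  rewrite v2_sub subrr.
  have -> : v2 0 (x - y) = (x - y) *: v2 0 1 by rewrite v2_scale mulr0 mulr1.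
  rewrite N_scale.
  have := N_ge0 (v2 0 1); have := normr_ge0 (x - y); nra.
have h11 : (-1 : R) <= 1 by lra.
have [c _ Hc] := EVT_min h11 (continuous_subspaceT cf).
exists (N (v2 1 c)); first exact: N_v2_pos1.
by move=> t ht; apply: Hc; rewrite in_itv /=.
Qed.

Lemma N_min2 : exists2 m, 0 < m & forall t, -1 <= t <= 1 -> m <= N (v2 t 1).
Proof.
have k0 : 0 < N (v2 1 0) + 1 by have := N_ge0 (v2 1 0); lra.
have cf : continuous (fun t => N (v2 t 1)).
  apply: (lip_cont k0) => x y.
  apply: le_trans (N_dist _ _) _.
  rewrite v2_sub subrr.
  have -> : v2 (x - y) 0 = (x - y) *: v2 1 0 by rewrite v2_scale mulr0 mulr1.
  rewrite N_scale.
  have := N_ge0 (v2 1 0); have := normr_ge0 (x - y); nra.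
have h11 : (-1 : R) <= 1 by lra.
have [c _ Hc] := EVT_min h11 (continuous_subspaceT cf).
exists (N (v2 c 1)); first exact: N_v2_pos2.
by move=> t ht; apply: Hc; rewrite in_itv /=.
Qed.

Lemma N_low : exists2 m, 0 < m & forall u v, m * (`|u| + `|v|) <= N (v2 u v).
Proof.
have [m1 m10 H1] := N_min1; have [m2 m20 H2] := N_min2.
have hm1 : Num.min m1 m2 <= m1 by rewrite ge_min lexx.
have hm2 : Num.min m1 m2 <= m2 by rewrite ge_min lexx orbT.
have hm0 : 0 < Num.min m1 m2 by rewrite lt_min m10 m20.
exists (Num.min m1 m2 / 2); first by rewrite divr_gt0.
move=> u v.
have nu := normr_ge0 u; have nv := normr_ge0 v.
case: (lerP `|v| `|u|) => huv.
- case: (eqVneq u 0) => [u0|u0].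
    subst u; rewrite normr0 in huv nu *.
    have : `|v| = 0 by apply/le_anti; rewrite huv normr_ge0.
    move=> ->; rewrite addr0 mulr0; exact: N_ge0.
  have -> : v2 u v = u *: v2 1 (v / u) by rewrite v2_scale mulr1 mulrCA mulfV // mulr1.
  rewrite N_scale.
  have hb : -1 <= v / u <= 1.
    by rewrite -ler_norml normf_div ler_pdivrMr ?normr_gt0 // mul1r.
  have := H1 _ hb; have := N_ge0 (v2 1 (v / u)); nra.
- have v0 : v != 0.
    by apply/eqP => v0; move: huv; rewrite v0 normr0; have := normr_ge0 u; lra.
  have -> : v2 u v = v *: v2 (u / v) 1 by rewrite v2_scale mulr1 mulrCA mulfV // mulr1.
  rewrite N_scale.
  have hb : -1 <= u / v <= 1.
    by rewrite -ler_norml normf_div ler_pdivrMr ?normr_gt0 // mul1r ltW.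
  have := H2 _ hb; have := N_ge0 (v2 (u / v) 1); nra.
Qed.
End Norm.

Lemma mulmx2 (R : realType) (A : 'M[R]_2) (w : 'cV[R]_2) :
  A *m w = v2 (A 0 0 * w 0 0 + A 0 1 * w 1 0) (A 1 0 * w 0 0 + A 1 1 * w 1 0).
Proof.
apply/matrixP => i j; rewrite !mxE !big_ord_recl big_ord0 addr0 (ord1 j).
have l1 : lift ord0 ord0 = 1 :> 'I_2 by apply: val_inj.
case: i => [[|[|//]] Hi] /=; rewrite l1.
  by have -> : Ordinal Hi = 0 by apply: val_inj.
by have -> : Ordinal Hi = 1 by apply: val_inj.
Qed.

Section Op.
Variables (R : realType) (N : 'cV[R]_2 -> R).
Hypothesis hN : is_norm N.

Lemma N_bound (A : 'M[R]_2) : exists B, forall w, N (A *m w) <= B * N w.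
Proof.
have [m m0 Hm] := N_low hN.
pose C := (`|A 0 0| + `|A 0 1| + `|A 1 0| + `|A 1 1|) * (N (v2 1 0) + N (v2 0 1)).
exists (C / m) => w.
rewrite [in N w](v2_dec w).
set w0 := w 0 0; set w1 := w 1 0.
have Hl := Hm w0 w1.
rewrite mulmx2; apply: le_trans (N_up hN _ _) _.
have e0 := N_ge0 hN (v2 1 0); have e1 := N_ge0 hN (v2 0 1).
have h0 : `|A 0 0 * w0 + A 0 1 * w1| <= (`|A 0 0| + `|A 0 1|) * (`|w0| + `|w1|).
  apply: le_trans (ler_normD _ _) _; rewrite !normrM.
  have := normr_ge0 (A 0 0); have := normr_ge0 (A 0 1);
  have := normr_ge0 w0; have := normr_ge0 w1; nra.
have h1 : `|A 1 0 * w0 + A 1 1 * w1| <= (`|A 1 0| + `|A 1 1|) * (`|w0| + `|w1|).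
  apply: le_trans (ler_normD _ _) _; rewrite !normrM.
  have := normr_ge0 (A 1 0); have := normr_ge0 (A 1 1);
  have := normr_ge0 w0; have := normr_ge0 w1; nra.
have hS : `|w0| + `|w1| <= N (v2 w0 w1) / m by rewrite ler_pdivlMr // mulrC.
have a00 := normr_ge0 (A 0 0); have a01 := normr_ge0 (A 0 1).
have a10 := normr_ge0 (A 1 0); have a11 := normr_ge0 (A 1 1).
have hSp : 0 <= `|w0| + `|w1| by rewrite addr_ge0.
rewrite /C mulrAC -mulrA.
set X := N (v2 w0 w1) / m in hS *.
set a := `|A 0 0 * w0 + A 0 1 * w1| in h0 *.
set b := `|A 1 0 * w0 + A 1 1 * w1| in h1 *.
set S := `|w0| + `|w1| in hS hSp h0 h1.
set Sg := `|A 0 0| + `|A 0 1| + `|A 1 0| + `|A 1 1|.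
have hSg : 0 <= Sg by rewrite /Sg; lra.
have ha : a <= Sg * S by apply: le_trans h0 _; apply: ler_wpM2r => //; rewrite /Sg; lra.
have hb : b <= Sg * S by apply: le_trans h1 _; apply: ler_wpM2r => //; rewrite /Sg; lra.
have hX : Sg * S <= Sg * X by rewrite ler_wpM2l.
apply: (@le_trans _ _ (Sg * X * N (v2 1 0) + Sg * X * N (v2 0 1))).
  by rewrite lerD // ler_wpM2r //; apply: le_trans hX.
rewrite -mulrDr -mulrA [X * _]mulrC; lra.
Qed.

Lemma opnorm_le (A : 'M[R]_2) w : N (A *m w) <= opnorm N A * N w.
Proof.
have [B HB] := N_bound A.
case: (eqVneq w 0) => [->|w0].
  by rewrite mulmx0 N_0 // mulr0.
have Np : 0 < N w.
  rewrite lt_def N_ge0 // andbT; apply/eqP => /(N_eq0 hN); exact/eqP.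
have hs : has_sup [set N (A *m v) | v in [set v | N v = 1]].
  split.
    exists (N (A *m ((N w)^-1 *: w))), ((N w)^-1 *: w) => //.
    by rewrite /= N_scale // ger0_norm ?invr_ge0 ?ltW // mulVf // gt_eqF.
  exists B => _ [v /= v1 <-]; by have := HB v; rewrite v1 mulr1.
have Hv : [set N (A *m v) | v in [set v | N v = 1]] (N (A *m ((N w)^-1 *: w))).
  by exists ((N w)^-1 *: w) => //=; rewrite N_scale // ger0_norm ?invr_ge0 ?ltW // mulVf // gt_eqF.
have hinv : `|(N w)^-1| = (N w)^-1 by rewrite ger0_norm // invr_ge0 ltW.
have := sup_upper_bound hs Hv.
rewrite -scalemxAr N_scale // hinv => H.
by rewrite /opnorm -ler_pdivrMr // mulrC.
Qed.
End Op.
Lemma exp_bounds (R : realType) (w : R) : `|w| <= 1/2 ->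
  `|expR w - 1 - w| <= 2 * w ^+ 2 /\ `|expR w - 1| <= 2 * `|w|.
Proof.
move=> hw.
have h1 := expR_ge1Dx w.
have h2 := expR_ge1Dx (- w).
rewrite expRN in h2.
have Ep := expR_gt0 w.
set E := expR w in h1 h2 Ep *.
have h3 : (1 - w) * E <= 1.
  by move: h2; rewrite -ler_pdivlMr // div1r.
have hw' : - (1/2) <= w <= 1/2 by rewrite -ler_norml; lra.
have hD : 0 <= E - 1 - w by lra.
have hD2 : E - 1 - w <= 2 * w ^+ 2 by rewrite expr2; nra.
split; first by rewrite ger0_norm.
have := ler_normD (E - 1 - w) w; rewrite subrK (ger0_norm hD) => h.
apply: le_trans h _.
have : 2 * w ^+ 2 <= `|w|.
  rewrite -(real_normK (num_real w)) expr2; have := normr_ge0 w; nra.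
lra.
Qed.

Lemma rem_bound (R : realType) (p c al u v w : R) :
  0 <= 1 - al <= 1 -> `|c| <= 1 -> w = - (u + c * v) -> `|u| + `|v| <= 1/2 ->
  `|(p + u) * ((1 - al) * expR w + al) - p
     - ((1 - (1 - al) * p) * u + (- c * (1 - al) * p) * v)|
  <= 2 * (`|p| + 1) * (`|u| + `|v|) ^+ 2.
Proof.
move=> hal hc hw hS.
have hwS : `|w| <= `|u| + `|v|.
  rewrite hw normrN; apply: le_trans (ler_normD _ _) _.
  rewrite lerD2l normrM; have := normr_ge0 v; have := normr_ge0 c; nra.
have [e1 e2] := exp_bounds (le_trans hwS hS).
have -> : (p + u) * ((1 - al) * expR w + al) - p
     - ((1 - (1 - al) * p) * u + (- c * (1 - al) * p) * v)
     = (1 - al) * (p * (expR w - 1 - w) + u * (expR w - 1)).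
  by rewrite hw; ring.
rewrite normrM (ger0_norm (proj1 (andP hal))).
set S := `|u| + `|v| in hS hwS *.
have hSp : 0 <= S by rewrite /S addr_ge0.
have hA : `|p * (expR w - 1 - w) + u * (expR w - 1)| <= 2 * (`|p| + 1) * S ^+ 2.
  apply: le_trans (ler_normD _ _) _; rewrite !normrM.
  have hw2 : w ^+ 2 <= S ^+ 2.
    rewrite -(real_normK (num_real w)) expr2 [S ^+ 2]expr2; have := normr_ge0 w; nra.
  have hu : `|u| <= S by rewrite /S; have := normr_ge0 v; lra.
  have np := normr_ge0 p; have nu := normr_ge0 u; have nw := normr_ge0 w.
  have n1 := normr_ge0 (expR w - 1 - w); have n2 := normr_ge0 (expR w - 1).
  have t1 : `|p| * `|expR w - 1 - w| <= `|p| * (2 * S ^+ 2).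
    by apply: ler_wpM2l => //; apply: le_trans e1 _; lra.
  have t2 : `|u| * `|expR w - 1| <= S * (2 * S).
    apply: le_trans (ler_wpM2l nu e2) _; rewrite expr2 in hw2 *; nra.
  rewrite expr2 in t1 *; nra.
apply: le_trans (ler_wpM2r (normr_ge0 _) (proj2 (andP hal))) _.
by rewrite mul1r.
Qed.

Lemma Kid (R : realType) (a b r s : R) : 0 < a < 1 -> 0 < b < 1 ->
  Kp a b r s + a * Kq a b r s = r /\ b * Kp a b r s + Kq a b r s = s.
Proof.
move=> ha hb.
have hab : 1 - a * b != 0 by apply/eqP; nra.
by rewrite /Kp /Kq; split; field.
Qed.

Lemma Jmat_entries (R : realType) (a b r s al be : R) :
  let J := Jmat a b r s al be in
  [/\ J 0 0 = 1 - (1 - al) * Kp a b r s, J 0 1 = - a * (1 - al) * Kp a b r s,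
      J 1 0 = - b * (1 - be) * Kq a b r s & J 1 1 = 1 - (1 - be) * Kq a b r s].
Proof. by rewrite /Jmat !mxE. Qed.

Lemma step (R : realType) (N : 'cV[R]_2 -> R) (a b r s al be lam x y : R) :
 is_norm N -> 0 < a < 1 -> 0 < b < 1 -> 0 <= 1 - al <= 1 -> 0 <= 1 - be <= 1 ->
 opnorm N (Jmat a b r s al be) <= lam ->
 `|x - Kp a b r s| + `|y - Kq a b r s| <= 1/2 ->
 N (v2 (x * ((1 - al) * expR (r - x - a * y) + al) - Kp a b r s)
       (y * ((1 - be) * expR (s - b * x - y) + be) - Kq a b r s))
 <= lam * N (v2 (x - Kp a b r s) (y - Kq a b r s))
    + 2 * (`|Kp a b r s| + `|Kq a b r s| + 1) * (N (v2 1 0) + N (v2 0 1))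
      * (`|x - Kp a b r s| + `|y - Kq a b r s|) ^+ 2.
Proof.
move=> hN ha hb hal hbe hlam hS.
have [id1 id2] := Kid r s ha hb.
set p := Kp a b r s in id1 id2 hS *; set q := Kq a b r s in id1 id2 hS *.
set J := Jmat a b r s al be in hlam *.
have [J00 J01 J10 J11] := Jmat_entries a b r s al be.
rewrite -/J -/p -/q in J00 J01 J10 J11.
set z := v2 (x - p) (y - q).
set z' := v2 _ _.
have -> : z' = J *m z + (z' - J *m z) by rewrite addrC subrK.
apply: le_trans (N_tri hN _ _) _.
apply: lerD.
  apply: le_trans (opnorm_le hN J z) _.
  by apply: ler_wpM2r => //; apply: N_ge0.
have z0 : z 0 0 = x - p by rewrite /z mxE.
have z1 : z 1 0 = y - q by rewrite /z mxE.
rewrite mulmx2 z0 z1 J00 J01 J10 J11 /z' v2_sub.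
apply: le_trans (N_up hN _ _) _.
set S := `|x - p| + `|y - q| in hS *.
have hc : `|a| <= 1 by rewrite ger0_norm; case/andP: ha => *; lra.
have hc' : `|b| <= 1 by rewrite ger0_norm; case/andP: hb => *; lra.
have g0 := @rem_bound R p a al (x - p) (y - q) (- ((x - p) + a * (y - q))) hal hc erefl hS.
have g1 := @rem_bound R q b be (y - q) (x - p) (- ((y - q) + b * (x - p))) hbe hc' erefl.
rewrite addrC in g1; have {}g1 := g1 hS.
have -> : x * ((1 - al) * expR (r - x - a * y) + al) - p -
   ((1 - (1 - al) * p) * (x - p) + - a * (1 - al) * p * (y - q)) =
   (p + (x - p)) * ((1 - al) * expR (- (x - p + a * (y - q))) + al) - p -
   ((1 - (1 - al) * p) * (x - p) + - a * (1 - al) * p * (y - q)).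
  have -> : - (x - p + a * (y - q)) = r - x - a * y by rewrite -id1; ring.
  by congr (_ - _ - _); ring.
have -> : y * ((1 - be) * expR (s - b * x - y) + be) - q -
   (- b * (1 - be) * q * (x - p) + (1 - (1 - be) * q) * (y - q)) =
   (q + (y - q)) * ((1 - be) * expR (- (y - q + b * (x - p))) + be) - q -
   ((1 - (1 - be) * q) * (y - q) + - b * (1 - be) * q * (x - p)).
  have -> : - (y - q + b * (x - p)) = s - b * x - y by rewrite -id2; ring.
  by rewrite [(- b * _ * _ * _) + _]addrC; congr (_ - _ - _); ring.
set G0 := `| _ | in g0 *.
set G1 := `| _ | in g1 *.
have e0 := N_ge0 hN (v2 1 0); have e1 := N_ge0 hN (v2 0 1).
have S2 : 0 <= S ^+ 2 by rewrite sqr_ge0.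
have np := normr_ge0 p; have nq := normr_ge0 q.
set Q := S ^+ 2 in S2 g0 g1 *.
have g0' : G0 <= 2 * (`|p| + `|q| + 1) * Q by apply: le_trans g0 _; nra.
have g1' : G1 <= 2 * (`|p| + `|q| + 1) * Q by apply: le_trans g1 _; nra.
set C := 2 * (`|p| + `|q| + 1) * Q in g0' g1' *.
have -> : 2 * (`|p| + `|q| + 1) * (N (v2 1 0) + N (v2 0 1)) * Q
   = C * N (v2 1 0) + C * N (v2 0 1) by rewrite /C; ring.
by apply: lerD; apply: ler_wpM2r.
Qed.
Lemma det_main (R : realType) (N : 'cV[R]_2 -> R) (a b r s lam : R) :
  is_norm N -> 0 < a < 1 -> 0 < b < 1 -> 0 < lam < 1 ->
  exists2 d0, 0 < d0 & forall xs ys als bes : nat -> R,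
   (forall n, 0 <= 1 - als n <= 1) -> (forall n, 0 <= 1 - bes n <= 1) ->
   (forall n, opnorm N (Jmat a b r s (als n) (bes n)) <= lam) ->
   (xs 0%N - Kp a b r s) ^+ 2 + (ys 0%N - Kq a b r s) ^+ 2 < d0 ^+ 2 ->
   (forall n, xs n.+1 = xs n * ((1 - als n) * expR (r - xs n - a * ys n) + als n)) ->
   (forall n, ys n.+1 = ys n * ((1 - bes n) * expR (s - b * xs n - ys n) + bes n)) ->
   (fun n => (xs n, ys n)) @ \oo --> (Kp a b r s, Kq a b r s).
Proof.
move=> hN ha hb hlam.
have [m m0 Hm] := N_low hN.
set p := Kp a b r s; set q := Kq a b r s.
have e0p := N_v2_pos1 hN 0; have e1 := N_ge0 hN (v2 0 1).
set M := N (v2 1 0) + N (v2 0 1).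
have M0 : 0 < M by rewrite /M; lra.
set Cg := 2 * (`|p| + `|q| + 1).
have Cg0 : 0 < Cg by rewrite /Cg; have := normr_ge0 p; have := normr_ge0 q; lra.
have lam1 : 0 < 1 - lam by case/andP: hlam => *; lra.
set eta := Num.min (m / 2) ((1 - lam) * m ^+ 2 / (2 * Cg * M)).
have eta0 : 0 < eta.
  by rewrite lt_min divr_gt0 //= divr_gt0 ?mulr_gt0 ?exprn_gt0.
have eta1 : eta <= m / 2 by rewrite ge_min lexx.
have eta2 : eta * (2 * Cg * M) <= (1 - lam) * m ^+ 2.
  rewrite -ler_pdivlMr ?mulr_gt0 //; by rewrite ge_min lexx orbT.
exists (eta / M); first by rewrite divr_gt0.
move=> xs ys als bes hal hbe hJ hx0 Hx Hy.
pose Nn n := N (v2 (xs n - p) (ys n - q)).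
pose S n := `|xs n - p| + `|ys n - q|.
have hSN : forall n, S n * m <= Nn n.
  by move=> n; rewrite mulrC; apply: Hm.
have hS0 : forall n, 0 <= S n by move=> n; rewrite /S addr_ge0.
have hNn0 : forall n, 0 <= Nn n by move=> n; apply: N_ge0.
set rho := (1 + lam) / 2.
have one : forall n, Nn n <= eta -> Nn n.+1 <= rho * Nn n.
  move=> n hn.
  have hSh : S n <= 1/2.
    have : S n * m <= m / 2 by apply: le_trans (hSN n) _; apply: le_trans hn _.
    by rewrite -ler_pdivlMr // mulrAC divff ?gt_eqF // mul1r.
  have := step (lam := lam) hN ha hb (hal n) (hbe n) (hJ n) hSh.
  rewrite -Hx -Hy -/(Nn n.+1) -/(Nn n) -/(S n) -/Cg -/M => h.
  apply: le_trans h _.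
  have hX := hSN n; have hNp := hNn0 n; have hSp := hS0 n.
  set X := Nn n in hX hNp hn *; set Sn := S n in hX hSp hSh *.
  have smp : 0 <= Sn * m by rewrite mulr_ge0 // ltW.
  have k1 : (Sn * m) ^+ 2 <= X * eta.
    rewrite expr2; nra.
  have CM : 0 <= Cg * M by rewrite mulr_ge0 // ltW.
  have eta3 : (Cg * M * eta) * 2 <= (1 - lam) * m ^+ 2.
    by apply: le_trans eta2; rewrite le_eqVlt; apply/orP; left; apply/eqP; ring.
  have k2 : Cg * M * Sn ^+ 2 * m ^+ 2 <= X * ((1 - lam) * m ^+ 2) / 2.
    apply: (@le_trans _ _ (Cg * M * (X * eta))).
      rewrite -mulrA -exprMn; exact: ler_wpM2l.
    set W := Cg * M * eta in eta3.
    set L := (1 - lam) * m ^+ 2 in eta3 *.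
    have -> : Cg * M * (X * eta) = X * W by rewrite /W; ring.
    rewrite ler_pdivlMr //; nra.
  have m2 : 0 < m ^+ 2 by rewrite exprn_gt0.
  have k3 : Cg * M * Sn ^+ 2 <= X * (1 - lam) / 2.
    rewrite -(ler_pM2r m2); apply: le_trans k2 _.
    by rewrite le_eqVlt; apply/orP; left; apply/eqP; ring.
  rewrite /rho; lra.
have d0p : 0 < eta / M by rewrite divr_gt0.
have hN0 : Nn 0%N <= eta.
  have hu : `|xs 0%N - p| < eta / M.
    have := real_normK (num_real (xs 0%N - p)); have := normr_ge0 (xs 0%N - p).
    have := sqr_ge0 (ys 0%N - q); move: hx0; rewrite -/p -/q; nra.
  have hv : `|ys 0%N - q| < eta / M.
    have := real_normK (num_real (ys 0%N - q)); have := normr_ge0 (ys 0%N - q).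
    have := sqr_ge0 (xs 0%N - p); move: hx0; rewrite -/p -/q; nra.
  apply: le_trans (N_up hN _ _) _.
  have -> : eta = eta / M * N (v2 1 0) + eta / M * N (v2 0 1).
    by rewrite -mulrDr -/M mulfVK // gt_eqF.
  by apply: lerD; apply: ler_wpM2r; solve [exact: N_ge0 | exact: ltW].
have rho0 : 0 <= rho by rewrite /rho; lra.
have rho1 : rho <= 1 by rewrite /rho; lra.
have ind : forall n, Nn n <= rho ^+ n * Nn 0%N.
  elim=> [|n IH]; first by rewrite expr0 mul1r.
  have hn : Nn n <= eta.
    apply: le_trans IH _; apply: le_trans hN0.
    by rewrite ler_piMl // exprn_ile1.
  apply: le_trans (one n hn) _.
  by rewrite exprS -mulrA ler_wpM2l.
have hS : forall n, S n <= rho ^+ n * (Nn 0%N / m).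
  move=> n; rewrite mulrA ler_pdivlMr //; exact: le_trans (hSN n) (ind n).
have rhoc : `|rho| < 1 by rewrite ger0_norm // /rho; lra.
have cr := cvg_expr rhoc.
have K0 : 0 <= Nn 0%N / m by rewrite divr_ge0 // ltW.
have conv : forall e, 0 < e -> \forall n \near \oo, S n <= e.
  move=> e e0.
  have ee : 0 < e / (Nn 0%N / m + 1) by rewrite divr_gt0 //; lra.
  have h := (cvgrPdist_le _ _).1 cr _ ee.
  near=> n.
  have : `|0 - rho ^+ n| <= e / (Nn 0%N / m + 1) by near: n; exact: h.
  rewrite sub0r normrN ger0_norm ?exprn_ge0 // => hr.
  apply: le_trans (hS n) _.
  move: hr; rewrite ler_pdivlMr; last by lra.
  have := exprn_ge0 n rho0; nra.
apply: (@cvg_pair _ _ _ _ (nbhs p) (nbhs q) _ _ _ xs ys); apply/cvgrPdist_le => e e0; near=> n;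
  (have hn : S n <= e by near: n; exact: conv).
  by apply: le_trans hn; rewrite distrC /S lerDl normr_ge0.
by apply: le_trans hn; rewrite distrC /S lerDr normr_ge0.
Unshelve. all: by end_near.
Qed.
Unset Implicit Arguments.
Theorem mainTheorem11 (d : measure_display) (T : measurableType d)
  (R : realType) (P : probability T R) (xi chi : nat -> T -> R)
  (a b r s al be l lb : R) :
  0 < a < 1 -> 0 < b < 1 -> a * s < r -> b * r < s ->
  assumption1 P xi chi ->
  0 <= al < 1 -> 0 <= be < 1 ->
  0 <= l < Num.min al (1 - al) -> 0 <= lb < Num.min be (1 - be) ->
  (exists (lam : R) (N : 'cV[R]_2 -> R),
     [/\ 0 < lam < 1, is_norm N &
       forall n : nat, {ae P, forall t,
         opnorm N (Jmat a b r s (al + l * xi n t) (be + lb * chi n t)) <= lam}]) ->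
  exists delta0 : R, 0 < delta0 /\
    forall x y : nat -> T -> R,
      (forall t, (x 0%N t - Kp a b r s) ^+ 2 + (y 0%N t - Kq a b r s) ^+ 2
                 < delta0 ^+ 2) ->
      (forall n t, x n.+1 t = x n t * ((1 - al - l * xi n.+1 t)
                     * expR (r - x n t - a * y n t) + al + l * xi n.+1 t)) ->
      (forall n t, y n.+1 t = y n t * ((1 - be - lb * chi n.+1 t)
                     * expR (s - b * x n t - y n t) + be + lb * chi n.+1 t)) ->
      {ae P, forall t,
        (fun n => (x n t, y n t)) @ \oo --> (Kp a b r s, Kq a b r s)}.
Proof.
move=> ha hb _ _ hA1 hal hbe hl hlb [lam [N [hlam hN HJ]]].
have [d0 d0p Hd] := det_main r s hN ha hb hlam.
exists d0; split => // x y hx0 Hx Hy.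
case: hA1 => _ _ _ _ hb1.
have HJ' := @ae_foralln _ _ _ P (fun n t => opnorm N (Jmat a b r s (al + l * xi n.+1 t)
   (be + lb * chi n.+1 t)) <= lam) (fun n => HJ n.+1).
case/andP: hl => l0; rewrite lt_min => /andP [l1 l2].
case/andP: hlb => lb0; rewrite lt_min => /andP [lb1 lb2].
near=> t.
have Ht : forall n, opnorm N (Jmat a b r s (al + l * xi n.+1 t)
   (be + lb * chi n.+1 t)) <= lam by near: t; exact: HJ'.
apply: (Hd (fun n => x n t) (fun n => y n t) (fun n => al + l * xi n.+1 t)
   (fun n => be + lb * chi n.+1 t)) => //.
- move=> n; have [h1 _] := hb1 n.+1 t.
  have : `|l * xi n.+1 t| <= l.
    by rewrite normrM ger0_norm //; have := normr_ge0 (xi n.+1 t); nra.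
  rewrite ler_norml => /andP [? ?]; apply/andP; split; lra.
- move=> n; have [_ h1] := hb1 n.+1 t.
  have : `|lb * chi n.+1 t| <= lb.
    by rewrite normrM ger0_norm //; have := normr_ge0 (chi n.+1 t); nra.
  rewrite ler_norml => /andP [? ?]; apply/andP; split; lra.
- by move=> n /=; rewrite Hx; ring.
- by move=> n /=; rewrite Hy; ring.
Unshelve. all: by end_near.
Qed.
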